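(* Let $m,n\ge0$. The elements $R(I,J)$ with $(I,J)\in X^+(m,n)$ span the ring $U^+_{m,n}$ as a $\mathbb Z$-module.
   Context: $U^+_{m,n}$ is the commutative ring generated over $\mathbb Z$ by $u_1,u_2,\dots$ and $v_0,v_1,\dots$, with conventions $u_0=1$ and $u_i=v_i=0$ for $i<0$, subject to the relations $R_I(w)=0$ for all $I\in\mathbb Z^{m+1}$, where $w_i=u_i-v_{-i-m+n}$ ($i\in\mathbb Z$) and for $I=(i_1,\dots,i_p)\in\mathbb Z^p$, $R_I(w)=\det(w_{i_\alpha+\beta-1})_{1\le\alpha,\beta\le p}$ ($R_\emptyset=1$); write $|I|=p$. For $I\in\mathbb Z^p$ and $J=(j_1,\dots,j_q)$ nonnegative integers, $R(I,J)=R_I(w)u_1^{j_1}\cdots u_q^{j_q}$. $X^+(m,n)$ is the set of pairs $(I,J)$ with $I$ a strictly decreasing finite sequence of integers, $J$ a finite sequence of nonnegative integers, $|I|\le m$, $|J|\le n$, $|I|-|J|=m-n$. *)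

(* Defs.v *)
From HB Require Import structures.
From mathcomp Require Import all_boot all_order all_algebra.
From mathcomp Require Import monalg.
Set Implicit Arguments. Unset Strict Implicit. Unset Printing Implicit Defensive.
Import Order.TTheory GRing.Theory Num.Theory.
Local Open Scope ring_scope.

(* Variables of the free polynomial ring over Z:
   inl k  stands for u_{k+1}  (k >= 0),   inr k  stands for v_k  (k >= 0). *)
Definition var := (nat + nat)%type.

Definition Pol := {malg int[{cmonom var}]}.

Definition Xvar (x : var) : Pol := << ucm x >>.

Definition uu (i : int) : Pol :=
  match i with
  | Posz 0 => 1
  | Posz k.+1 => Xvar (inl k)
  | Negz _ => 0
  end.

Definition vv (i : int) : Pol :=
  match i with
  | Posz k => Xvar (inr k)
  | Negz _ => 0
  end.

Definition ww (m n : nat) (i : int) : Pol := uu i - vv (- i - m%:Z + n%:Z).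

(* R_I(w) = det (w_{i_alpha + beta - 1})_{1 <= alpha, beta <= p}, p = |I|;
   with 0-based indices a, b this is the entry w_{I_a + b}. *)
Definition RI (m n : nat) (I : seq int) : Pol :=
  \det (\matrix_(a < size I, b < size I) ww m n (I`_a + b%:Z)).

Definition RIJ (m n : nat) (I : seq int) (J : seq nat) : Pol :=
  RI m n I * \prod_(k < size J) uu (k.+1)%:Z ^+ (nth 0%N J k).

Definition Xplus (m n : nat) (I : seq int) (J : seq nat) : bool :=
  [&& sorted (fun x y : int => y < x) I, (size I <= m)%N, (size J <= n)%N
    & (size I)%:Z - (size J)%:Z == m%:Z - n%:Z].

Definition in_rel_ideal (m n : nat) (P : Pol) : Prop :=
  exists t : seq (Pol * seq int),
    all (fun y => size y.2 == m.+1) t /\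
    P = \sum_(y <- t) y.1 * RI m n y.2.

(* Main.v *)
Require Import Defs.
From HB Require Import structures.
From mathcomp Require Import all_boot all_order all_algebra all_fingroup.
From mathcomp Require Import finmap monalg zify ring.
Set Implicit Arguments. Unset Strict Implicit. Unset Printing Implicit Defensive.
Import Order.TTheory GRing.Theory Num.Theory.
Local Open Scope ring_scope.


Definition Rf (R : comPzRingType) (w : int -> R) (p : nat) (F : 'I_p -> int) : R :=
  \det (\matrix_(a, b) w (F a + (b : nat)%:Z)).

Lemma Rf_cast (R : comPzRingType) (w : int -> R) p q (e : p = q) (F : 'I_p -> int) (G : 'I_q -> int) :
  (forall a, F a = G (cast_ord e a)) -> Rf w F = Rf w G.
Proof.
case: q / e G => G h; rewrite /Rf; congr (\det _); apply/matrixP => a b.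
by rewrite !mxE h cast_ord_id.
Qed.

Definition tos p (F : 'I_p -> int) : seq int :=
  mkseq (fun i => if insub i is Some a then F a else 0) p.

Lemma size_tos p (F : 'I_p -> int) : size (tos F) = p.
Proof. by rewrite size_mkseq. Qed.

Lemma nth_tos p (F : 'I_p -> int) (a : 'I_p) : (tos F)`_a = F a.
Proof. rewrite nth_mkseq //; case: insubP => [a0 _ /val_inj -> //|]; by rewrite ltn_ord. Qed.

Definition RIs (R : comPzRingType) (w : int -> R) (s : seq int) :=
  Rf w (fun a : 'I_(size s) => s`_a).

Lemma Rf_tos (R : comPzRingType) (w : int -> R) p (F : 'I_p -> int) :
  Rf w F = RIs w (tos F).
Proof.
rewrite /RIs; apply: (@Rf_cast R w _ _ (esym (size_tos F))) => a.
by rewrite -[in LHS](nth_tos F a).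
Qed.

Lemma RI_RIs m n s : RI m n s = RIs (ww m n) s.
Proof. by []. Qed.

Definition ext p (F : 'I_p -> int) (r : int) : 'I_p.+1 -> int :=
  fun a => if unlift ord_max a is Some a' then F a' else r.

Definition D (R : comPzRingType) (w : int -> R) p (b0 : 'I_p.+1) (F : 'I_p -> int) : R :=
  \det (\matrix_(a, b) w (F a + (lift b0 b : nat)%:Z)).

Lemma laplace (R : comPzRingType) (w : int -> R) p (F : 'I_p -> int) r :
  Rf w (ext F r) = \sum_(b0 : 'I_p.+1) w (r + (b0:nat)%:Z) * ((-1) ^+ (p + b0) * D w b0 F).
Proof.
rewrite /Rf (expand_det_row _ ord_max); apply: eq_bigr => b0 _.
rewrite mxE /ext unlift_none /cofactor /=; congr (_ * (_ * _)).
congr (\det _); apply/matrixP => a b; rewrite !mxE /=.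
by rewrite liftK.
Qed.

Definition Rsh (R : comPzRingType) (w : int -> R) p (S : {set 'I_p}) (F : 'I_p -> int) :=
  Rf w (fun a => F a + ((a \in S) : nat)%:Z).
Definition Csh (R : comPzRingType) (w : int -> R) p (S : {set 'I_p}) (F : 'I_p -> int) :=
  \det (\matrix_(a, b) w (F a + (b : nat)%:Z + ((b \in S) : nat)%:Z)).

Lemma sum_Rsh_Csh (R : comPzRingType) (w : int -> R) p (F : 'I_p -> int) k :
  \sum_(S : {set 'I_p} | #|S| == k) Rsh w S F = \sum_(S : {set 'I_p} | #|S| == k) Csh w S F.
Proof.
rewrite /Rsh /Rf /Csh.
transitivity (\sum_(S : {set 'I_p} | #|S| == k) \sum_(s : 'S_p) (-1) ^+ s *
    \prod_i w (F i + ((i \in S) : nat)%:Z + (s i : nat)%:Z)).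
  apply: eq_bigr => S _; rewrite /(\det _); apply: eq_bigr => s _; congr (_ * _).
  by apply: eq_bigr => i _; rewrite mxE.
transitivity (\sum_(S : {set 'I_p} | #|S| == k) \sum_(s : 'S_p) (-1) ^+ s *
    \prod_i w (F i + (s i : nat)%:Z + ((s i \in S) : nat)%:Z)); last first.
  apply: eq_bigr => S _; rewrite /(\det _); apply: eq_bigr => s _; congr (_ * _).
  by apply: eq_bigr => i _; rewrite mxE.
rewrite exchange_big [RHS]exchange_big; apply: eq_bigr => s _.
have hP (T : {set 'I_p}) y : (y \in (s^-1)%g @^-1: T) = ((s^-1)%g y \in T).
  by rewrite inE.
rewrite [RHS](reindex_inj (h := fun T : {set 'I_p} => (s^-1)%g @^-1: T)); last first.
  move=> T1 T2 /setP h; apply/setP => x; have := h (s x).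
  by rewrite !hP permK.
apply: eq_big => [T|T _].
  by rewrite card_preimset //; apply: perm_inj.
congr (_ * _); apply: eq_bigr => i _; rewrite hP permK.
by congr w; rewrite -!addrA [X in _ + X]addrC.
Qed.

Lemma card_geset p x : #|[set c : 'I_p | (x <= c)%N]| = (p - x)%N.
Proof.
rewrite -sum1_card (eq_bigl (fun c : 'I_p => true && (x <= c)%N)); last first.
  by move=> c; rewrite inE.
by rewrite -(big_geq_mkord x p xpredT (fun _ => 1%N)) sum_nat_const_nat muln1.
Qed.

Lemma Csh_zero (R : comPzRingType) (w : int -> R) p (S : {set 'I_p}) (F : 'I_p -> int) (b c : 'I_p) :
  (c : nat) = b.+1 -> b \in S -> c \notin S -> Csh w S F = 0.
Proof.
move=> hc hb hnc; rewrite /Csh -det_tr.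
apply: (determinant_alternate (i1 := b) (i2 := c)).
  by apply/eqP => /(congr1 val) /=; rewrite hc; lia.
move=> j; rewrite !mxE hb (negbTE hnc) hc; congr w; rewrite /=; lia.
Qed.

Lemma Csh_U (R : comPzRingType) (w : int -> R) p (b0 : 'I_p.+1) (F : 'I_p -> int) :
  Csh w [set b : 'I_p | (b0 <= b)%N] F = D w b0 F.
Proof.
rewrite /Csh /D; congr (\det _); apply/matrixP => a b; rewrite !mxE inE /= /bump.
by congr w; case: (b0 <= b)%N => /=; lia.
Qed.

Lemma closed_ge p (S : {set 'I_p}) (b : 'I_p) :
  (forall x y : 'I_p, (y : nat) = x.+1 -> x \in S -> y \in S) -> b \in S ->
  [set c : 'I_p | (b <= c)%N] \subset S.
Proof.
move=> hcl hb; apply/subsetP => c; rewrite inE => hbc.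
have : forall k (c : 'I_p), (c : nat) = (b + k)%N -> c \in S.
  elim => [|k IH] c' hc'.
    by have -> : c' = b by apply: val_inj => /=; rewrite hc' addn0.
  have hlt : (b + k < p)%N by have := ltn_ord c'; lia.
  apply: (hcl (Ordinal hlt)) => //=; first by rewrite hc'; lia.
  by apply: IH.
by move/(_ (c - b)%N c); apply; lia.
Qed.

Lemma witness p (S : {set 'I_p}) (b0 : 'I_p.+1) :
  #|S| = (p - b0)%N -> S != [set b : 'I_p | (b0 <= b)%N] ->
  exists b c : 'I_p, [/\ (c : nat) = b.+1, b \in S & c \notin S].
Proof.
move=> hcard hne.
case E: [exists b : 'I_p, exists c : 'I_p, [&& (c : nat) == b.+1, b \in S & c \notin S]].
  case/existsP: E => b /existsP [c /and3P [/eqP h1 h2 h3]]; by exists b, c.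
exfalso; move/negbT: E => /existsPn E.
have hcl : forall x y : 'I_p, (y : nat) = x.+1 -> x \in S -> y \in S.
  move=> x y hxy hx; move/existsPn: (E x) => /(_ y).
  by rewrite hxy eqxx hx /= negbK.
have sub : S \subset [set b : 'I_p | (b0 <= b)%N].
  apply/subsetP => b hb; rewrite inE; case: (leqP b0 b) => // hlt.
  have := subset_leq_card (closed_ge hcl hb); rewrite card_geset hcard.
  have := ltn_ord b0; lia.
move: hne; rewrite eqEcard sub card_geset hcard /=.
by have := ltn_ord b0; rewrite leqnn.
Qed.

Lemma D_sum (R : comPzRingType) (w : int -> R) p (b0 : 'I_p.+1) (F : 'I_p -> int) :
  D w b0 F = \sum_(S : {set 'I_p} | #|S| == (p - b0)%N) Rsh w S F.
Proof.
rewrite sum_Rsh_Csh (bigD1 [set b : 'I_p | (b0 <= b)%N]) /=; last by rewrite card_geset.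
rewrite Csh_U big1 ?addr0 // => S /andP [/eqP hc hne].
by have [b [c [h1 h2 h3]]] := witness hc hne; apply: Csh_zero h1 h2 h3.
Qed.

Inductive zspan (R : comPzRingType) (A : R -> Prop) : R -> Prop :=
| zspan0 : zspan A 0
| zspanG x : A x -> zspan A x
| zspanD x y : zspan A x -> zspan A y -> zspan A (x + y)
| zspanN x : zspan A x -> zspan A (- x).

Lemma zspanB (R : comPzRingType) (A : R -> Prop) x y : zspan A x -> zspan A y -> zspan A (x - y).
Proof. by move=> hx hy; apply: zspanD => //; apply: zspanN. Qed.

Lemma zspan_sum (R : comPzRingType) (A : R -> Prop) (I : Type) (r : seq I) (P : pred I) (f : I -> R) :
  (forall i, P i -> zspan A (f i)) -> zspan A (\sum_(i <- r | P i) f i).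
Proof. by move=> h; apply: big_ind => //; [apply: zspan0 | apply: zspanD]. Qed.

Lemma zspan_sign (R : comPzRingType) (A : R -> Prop) k x : zspan A x -> zspan A ((-1) ^+ k * x).
Proof.
move=> h; elim: k => [|k IH]; first by rewrite expr0 mul1r.
by rewrite exprS mulN1r mulNr; apply: zspanN.
Qed.

Lemma zspan_mulz (R : comPzRingType) (A : R -> Prop) x (z : int) : zspan A x -> zspan A (x *~ z).
Proof.
move=> h.
have hn (k : nat) : zspan A (x *+ k).
  by elim: k => [|k IH]; [rewrite mulr0n; apply: zspan0 | rewrite mulrSr; apply: zspanD].
move: h; case: z => k h; first by rewrite -pmulrn.
by rewrite NegzE mulrNz -pmulrn; apply: zspanN.
Qed.

Lemma zspan_elim (R : comPzRingType) (A : R -> Prop) (B : R -> Prop) :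
  B 0 -> (forall x y, B x -> B y -> B (x + y)) -> (forall x, B x -> B (- x)) ->
  (forall x, A x -> B x) -> forall x, zspan A x -> B x.
Proof. by move=> h0 hD hN hA x; elim => //; auto. Qed.

Lemma zspan_mulr (R : comPzRingType) (A B : R -> Prop) (c : R) x :
  (forall y, A y -> zspan B (y * c)) -> zspan A x -> zspan B (x * c).
Proof.
move=> h; elim => [|y /h //|y z _ hy _ hz|y _ hy].
- by rewrite mul0r; apply: zspan0.
- by rewrite mulrDl; apply: zspanD.
- by rewrite mulNr; apply: zspanN.
Qed.

Lemma arith1 (d k : int) (p N i : nat) : (d + p%:Z < k)%R ->
  (d + 1 - N.+1%:Z <= k <= d + p%:Z + N.+1%:Z)%R -> (i < p)%N ->
  (d + 1 - N%:Z <= k - p%:Z + i%:Z <= d + p%:Z + N%:Z)%R.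
Proof. lia. Qed.

Lemma arith2 (d k : int) (p N i : nat) : (k <= d)%R ->
  (d + 1 - N.+1%:Z <= k <= d + p%:Z + N.+1%:Z)%R -> (i < p)%N ->
  (d + 1 - N%:Z <= k + (i.+1)%:Z <= d + p%:Z + N%:Z)%R.
Proof. lia. Qed.

Definition KG (R : comPzRingType) (w : int -> R) (d : int) (p : nat) (Q : R) : Prop :=
  (exists (F : 'I_p -> int) (j : int), (d < j <= d + p%:Z)%R /\ Q = Rf w F * w j) \/
  (exists (G : 'I_p.+1 -> int) (P : R), Q = Rf w G * P).

Lemma key (R : comPzRingType) (w : int -> R) (d : int) (p : nat) (k : int) (F : 'I_p -> int) :
  zspan (KG w d p) (w k * Rf w F).
Proof.
suff : forall N k, (d + 1 - N%:Z <= k <= d + p%:Z + N%:Z)%R ->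
    forall F : 'I_p -> int, zspan (KG w d p) (w k * Rf w F).
  by move=> H; apply: (H (`|k - d|%N.+1)); lia.
elim => [|N IH] {}k hk {}F.
  apply: zspanG; left; exists F, k; split; first lia.
  by rewrite mulrC.
case: (boolP (d < k <= d + p%:Z)%R) => hw.
  by apply: zspanG; left; exists F, k; split => //; rewrite mulrC.
case: (boolP (d < k)%R) => hdk.
-
  pose r := (k - p%:Z)%R.
  have eq : w k * Rf w F = Rf w (ext F r) -
     \sum_(i < p) w (r + (i : nat)%:Z) * ((-1) ^+ (p + i) * D w (widen_ord (leqnSn p) i) F).
    rewrite laplace big_ord_recr /= addrC addrK.
    have -> : D w ord_max F = Rf w F.
      rewrite /D /Rf; congr (\det _); apply/matrixP => a b; rewrite !mxE /=.
      by rewrite /bump leqNgt ltn_ord.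
    rewrite -signr_odd oddD addbb expr0 mul1r.
    by congr (w _ * _); rewrite /r subrK.
  rewrite eq; apply: zspanB.
    by apply: zspanG; right; exists (ext F r), 1; rewrite mulr1.
  apply: zspan_sum => i _; rewrite D_sum mulrCA; apply: zspan_sign.
  rewrite mulr_sumr; apply: zspan_sum => S _; rewrite /Rsh; apply: IH.
  have hkp : (d + p%:Z < k)%R by move: hw; rewrite hdk /= -ltNge.
  exact: (arith1 hkp hk (ltn_ord i)).
-
  pose F0 := fun a => (F a - 1)%R.
  have eq : Rf w (ext F0 k) = (-1) ^+ p * (w k * Rf w F) +
     \sum_(i < p) w (k + (lift ord0 i : nat)%:Z) * ((-1) ^+ (p + lift ord0 i) * D w (lift ord0 i) F0).
    rewrite laplace big_ord_recl /= addr0 addn0; congr (_ + _).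
    have -> : D w ord0 F0 = Rf w F.
      rewrite /D /Rf; congr (\det _); apply/matrixP => a b; rewrite !mxE /= /F0.
      by congr w; rewrite /bump add1n -addn1 PoszD [_ + Posz 1]addrC addrA subrK.
    by rewrite mulrCA.
  have eq2 : w k * Rf w F = (-1) ^+ p * (Rf w (ext F0 k) -
     \sum_(i < p) w (k + (lift ord0 i : nat)%:Z) * ((-1) ^+ (p + lift ord0 i) * D w (lift ord0 i) F0)).
    by rewrite eq addrK signrMK.
  rewrite eq2; apply: zspan_sign; apply: zspanB.
    by apply: zspanG; right; exists (ext F0 k), 1; rewrite mulr1.
  apply: zspan_sum => i _; rewrite D_sum mulrCA; apply: zspan_sign.
  rewrite mulr_sumr; apply: zspan_sum => S _; rewrite /Rsh; apply: IH.
  have hkd : (k <= d)%R by rewrite leNgt.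
  exact: (arith2 hkd hk (ltn_ord i)).
Qed.


Lemma Rf_perm (R : comPzRingType) (w : int -> R) p (F : 'I_p -> int) (s : 'S_p) :
  Rf w (fun i => F (s i)) = (-1) ^+ s * Rf w F.
Proof.
rewrite /Rf -det_perm -det_mulmx -row_permE; congr (\det _).
by apply/matrixP => a b; rewrite !mxE.
Qed.

Lemma sort_Rf (R : comPzRingType) (w : int -> R) p (F : 'I_p -> int) :
  Rf w F = 0 \/ exists s : seq int, [/\ sorted (fun x y : int => y < x) s, size s = p &
     (Rf w F = RIs w s \/ Rf w F = - RIs w s)].
Proof.
case: (boolP (injectiveb F)) => [/injectiveP inj|/injectivePn [i [j hij hF]]]; last first.
  left; rewrite /Rf; apply: (determinant_alternate hij) => b.
  by rewrite !mxE hF.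
right; pose t := [tuple F i | i < p].
have ut : uniq t by rewrite map_inj_uniq // val_ord_tuple enum_uniq.
pose s0 := rev (sort <=%O (val t)).
have hs0 : perm_eq s0 t by rewrite perm_rev perm_sort.
have [sg hsg] := tuple_permP hs0.
have sz : size s0 = p by rewrite hsg size_tuple.
exists s0; split => //.
  by rewrite rev_sorted sort_lt_sorted.
have hk (k : 'I_p) : s0`_k = F (sg k).
  by rewrite hsg nth_mktuple tnth_mktuple.
have e1 : RIs w s0 = Rf w (fun i => F (sg i)).
  rewrite /RIs; apply: (@Rf_cast R w _ _ sz) => a.
  exact: (hk (cast_ord sz a)).
rewrite Rf_perm in e1.
have -> : Rf w F = (-1) ^+ sg * RIs w s0 by rewrite e1 signrMK.
by case: (odd_perm sg); [right; rewrite expr1 mulN1r | left; rewrite expr0 mul1r].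
Qed.

Lemma I0 m n : in_rel_ideal m n 0.
Proof. by exists [::]; rewrite big_nil. Qed.

Lemma ID m n P Q : in_rel_ideal m n P -> in_rel_ideal m n Q -> in_rel_ideal m n (P + Q).
Proof.
move=> [t1 [h1 ->]] [t2 [h2 ->]]; exists (t1 ++ t2).
by rewrite all_cat h1 h2 big_cat.
Qed.

Lemma IN m n P : in_rel_ideal m n P -> in_rel_ideal m n (- P).
Proof.
move=> [t [h ->]]; exists [seq (- y.1, y.2) | y <- t]; split.
  by rewrite all_map.
by rewrite big_map -sumrN; apply: eq_bigr => y _; rewrite mulNr.
Qed.

Lemma IM m n P Q : in_rel_ideal m n P -> in_rel_ideal m n (P * Q).
Proof.
move=> [t [h ->]]; exists [seq (y.1 * Q, y.2) | y <- t]; split.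
  by rewrite all_map.
rewrite big_map mulr_suml; apply: eq_bigr => y _.
by rewrite [LHS]mulrAC.
Qed.

Lemma IG m n s P : size s = m.+1 -> in_rel_ideal m n (RI m n s * P).
Proof.
move=> hs; exists [:: (P, s)]; split.
  by rewrite /all hs eqxx.
by rewrite big_seq1 mulrC.
Qed.

Definition Gp m n (P : Pol) := exists s : seq (int * (seq int * seq nat)),
    all (fun x => Xplus m n x.2.1 x.2.2) s /\
    in_rel_ideal m n (P - \sum_(x <- s) RIJ m n x.2.1 x.2.2 *~ x.1).

Lemma G_ideal m n P : in_rel_ideal m n P -> Gp m n P.
Proof. by move=> h; exists [::]; rewrite big_nil subr0. Qed.

Lemma G0 m n : Gp m n 0.
Proof. exact/G_ideal/I0. Qed.

Lemma GD m n P Q : Gp m n P -> Gp m n Q -> Gp m n (P + Q).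
Proof.
move=> [s1 [h1 i1]] [s2 [h2 i2]]; exists (s1 ++ s2); split.
  by rewrite all_cat h1 h2.
by rewrite big_cat /= opprD addrACA; apply: ID.
Qed.

Lemma GN m n P : Gp m n P -> Gp m n (- P).
Proof.
move=> [s [h i]]; exists [seq (- x.1, x.2) | x <- s]; split.
  by rewrite all_map.
rewrite big_map (eq_bigr (fun x => - (RIJ m n x.2.1 x.2.2 *~ x.1))); last first.
  by move=> x _; rewrite [LHS]mulrNz.
rewrite sumrN; set S := \sum_(x <- s) _.
suff -> : - P - - S = - (P - S) by apply: IN.
by rewrite opprB opprK addrC.
Qed.

Lemma G_span m n (A : Pol -> Prop) P : (forall x, A x -> Gp m n x) -> zspan A P -> Gp m n P.
Proof.
move=> hA; apply: zspan_elim => //; [exact: G0 | exact: GD | exact: GN].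
Qed.

Definition Mon (q : nat) (e : nat -> nat) : Pol :=
  \prod_(0 <= k < q) uu (k.+1)%:Z ^+ e k.

Lemma Gbasic m n p q (F : 'I_p -> int) (e : nat -> nat) :
  (p <= m)%N -> (p + n = q + m)%N -> Gp m n (Rf (ww m n) F * Mon q e).
Proof.
move=> hpm hpq.
have hJ : forall s : seq int, size s = p -> sorted (fun x y : int => y < x) s ->
    RIs (ww m n) s * Mon q e = RIJ m n s (mkseq e q) /\ Xplus m n s (mkseq e q).
  move=> s hs hsort; split.
    rewrite /RIJ -RI_RIs; congr (_ * _).
    rewrite /Mon -(big_mkord xpredT (fun k => uu (k.+1)%:Z ^+ nth 0%N (mkseq e q) k)) size_mkseq.
    by apply: eq_big_nat => k hk; rewrite nth_mkseq.
  rewrite /Xplus hsort hs size_mkseq hpm /=.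
  apply/andP; split; first lia.
  by apply/eqP; lia.
case: (sort_Rf (ww m n) F) => [->|[s [hsort hs hor]]].
  by rewrite mul0r; apply: G0.
have [e1 xp] := hJ s hs hsort.
case: hor => ->.
  exists [:: (1, (s, mkseq e q))]; split; first by rewrite /= xp.
  by rewrite big_seq1 /= e1 subrr; apply: I0.
exists [:: (-1, (s, mkseq e q))]; split; first by rewrite /= xp.
by rewrite big_seq1 /= mulNr e1 mulrN1z subrr; apply: I0.
Qed.


Lemma UMt (k1 k2 : cmonom var) : (<< mulcm k1 k2 >> : Pol) = << k1 >> * << k2 >>.
Proof. rewrite malgM_def fgmulUU mulr1. reflexivity. Qed.

Lemma mul_closed (H : Pol -> Prop) :
  H 0 -> (forall x y, H x -> H y -> H (x + y)) -> (forall x, H x -> H (- x)) ->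
  (forall Q v, H Q -> H (Q * Xvar v)) -> forall Q P, H Q -> H (Q * P).
Proof.
move=> h0 hD hN hV.
have e1 : (<< onecm var >> : Pol) = 1 by rewrite -mpolyC1E.
have hz : forall x (z : int), H x -> H (x *~ z).
  move=> x z hx.
  have hn (k : nat) : H (x *+ k).
    by elim: k => [|k IH]; [rewrite mulr0n | rewrite mulrSr; apply: hD].
  by case: z => k; [rewrite -pmulrn | rewrite NegzE mulrNz -pmulrn; apply: hN].
have UM := UMt.
have hmon : forall N (k : cmonom var) Q, (mdeg k <= N)%N -> H Q -> H (Q * << k >>).
  elim => [|N IH] k Q hk hQ.
    have -> : k = onecm _ by apply: mdeg_eq0I; lia.
    by rewrite e1 mulr1.
  case: (boolP (finsupp k == fset0)) => [/eqP h|].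
    have -> : k = onecm _.
      apply/eqP/cmP => j; rewrite onecmE; apply/eqP; rewrite cmE_eq0 h.
      by rewrite in_fset0.
    by rewrite e1 mulr1.
  case/fset0Pn => i hi.
  have ek : k = mulcm (ucm i) (divcm k (ucm i)).
    apply/eqP/cmP => j; rewrite mulcmE divcmE ucmE.
    case: eqP => [<-|_]; last by rewrite add0n subn0.
    by move: hi; rewrite -cmE_neq0; lia.
  rewrite ek UM mulrA; apply: IH; last by apply: hV.
  move: hk; rewrite {1}ek (mdegM (ucm i)) mdegU; lia.
move=> Q P hQ; rewrite (monalgE P) mulr_sumr; apply: big_ind.
- exact: h0.
- exact: hD.
move=> k _.
have hk : H (Q * << k >>) by apply: (hmon _ k Q (leqnn _) hQ).
have hn (n : nat) : H (Q * (<< 1 *g k >> *+ n)).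
  rewrite mulrnAr; elim: n => [|n IH].
    rewrite mulr0n; exact: h0.
  rewrite mulrSr; apply: hD; [exact: IH | exact: hk].
case: (P@_k) => n.
  rewrite -natz monalgUMn; exact: hn.
rewrite NegzE -natz monalgUN monalgUMn mulrN; apply: hN; apply: hn.
Qed.

Lemma uu_neg (i : int) : (i < 0)%R -> uu i = 0.
Proof. by case: i => [k|k] h //; lia. Qed.

Lemma ww_gt m n i : (n%:Z - m%:Z < i)%R -> ww m n i = uu i.
Proof.
move=> h; rewrite /ww; have : (- i - m%:Z + n%:Z < 0)%R by lia.
by case: (- i - m%:Z + n%:Z) => [k|k] hk; [lia | rewrite /= subr0].
Qed.

Lemma vv_eq m n (j : int) : vv j = uu (n%:Z - m%:Z - j) - ww m n (n%:Z - m%:Z - j).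
Proof.
rewrite /ww; have -> : (- (n%:Z - m%:Z - j) - m%:Z + n%:Z) = j by lia.
by rewrite opprB addrC subrK.
Qed.

Lemma D_max (R : comPzRingType) (w : int -> R) p (F : 'I_p -> int) : D w ord_max F = Rf w F.
Proof.
rewrite /D /Rf; congr (\det _); apply/matrixP => a b; rewrite !mxE /=.
by rewrite /bump leqNgt ltn_ord.
Qed.

Lemma padding m n p (F : 'I_p -> int) : (p + n < m)%N ->
  Rf (ww m n) (ext F (- p%:Z)) = Rf (ww m n) F.
Proof.
move=> h; rewrite laplace big_ord_recr /= big1 ?add0r.
  rewrite D_max -signr_odd oddD addbb expr0 mul1r addNr.
  by rewrite ww_gt ?mul1r //; lia.
move=> i _; rewrite ww_gt; last by have := ltn_ord i; lia.
by rewrite uu_neg ?mul0r //; have := ltn_ord i; lia.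
Qed.

Lemma Mon0 q : Mon q (fun _ => 0%N) = 1.
Proof. by rewrite /Mon big1 // => k _; rewrite expr0. Qed.

Lemma prod_bump (R : comPzRingType) (f : nat -> R) q e j : (j < q)%N ->
  \prod_(0 <= k < q) f k ^+ (e k + (k == j))%N = (\prod_(0 <= k < q) f k ^+ e k) * f j.
Proof.
move=> hj.
under eq_bigr => k _ do rewrite exprD.
rewrite big_split /=; congr (_ * _).
rewrite (bigD1_seq j) /=; last first.
- exact: iota_uniq.
- by rewrite mem_index_iota.
rewrite eqxx expr1 big1; first by rewrite mulr1.
by move=> k /negbTE ->; rewrite expr0.
Qed.

Lemma Mon_bump q e j : (j < q)%N ->
  Mon q e * uu (j.+1)%:Z = Mon q (fun k => (e k + (k == j))%N).
Proof.
move=> hj; rewrite /Mon (prod_bump (fun k => uu (k.+1)%:Z) e hj).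
reflexivity.
Qed.

Definition Claim m n p := forall (F : 'I_p -> int) (P : Pol), Gp m n (Rf (ww m n) F * P).

Lemma claim_top m n : Claim m n m.+1.
Proof.
move=> F P; apply: G_ideal; rewrite Rf_tos.
by apply: IG; rewrite size_tos.
Qed.

Lemma claim_step m n p : (p <= m)%N -> Claim m n p.+1 -> Claim m n p.
Proof.
move=> hpm IH.
case: (ltnP (p + n) m) => hpn.
  move=> F P; rewrite -(padding F hpn); exact: IH.
pose q := (p + n - m)%N.
have hq : (p + n = q + m)%N by rewrite /q; lia.
pose w := ww m n.
pose d := (n%:Z - m%:Z)%R.
pose HG := fun Q : Pol => (exists (F : 'I_p -> int) (e : nat -> nat), Q = Rf w F * Mon q e) \/
   (exists (G : 'I_p.+1 -> int) (P : Pol), Q = Rf w G * P).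
have HG_G : forall Q, HG Q -> Gp m n Q.
  move=> Q [[F [e ->]]|[G [P ->]]]; [exact: Gbasic | exact: IH].
have L1 : forall (i : int) (F : 'I_p -> int) e, (i <= q%:Z)%R -> zspan HG (Rf w F * Mon q e * uu i).
  move=> i F e hi; case: i hi => [[|j]|j] hi.
  - rewrite mulr1; apply: zspanG; left; exists F, e; reflexivity.
  - rewrite -mulrA Mon_bump; last by lia.
    apply: zspanG; left; exists F, (fun k => (e k + (k == j))%N); reflexivity.
  - have -> : uu (Negz j) = 0 by [].
    rewrite mulr0; exact: zspan0.
have L2 : forall (k : int) (F : 'I_p -> int) e, zspan HG (Rf w F * Mon q e * w k).
  move=> k F e; rewrite mulrAC [Rf w F * w k]mulrC.
  apply: (zspan_mulr (A := KG w d p)); last exact: key.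
  move=> y [[F' [j [hj ->]]]|[G [P ->]]].
    rewrite mulrAC /w ww_gt; last by move: hj; rewrite /d; lia.
    apply: L1; move: hj; rewrite /d; lia.
  rewrite -mulrA; apply: zspanG; right; exists G, (P * Mon q e); reflexivity.
have L3 : forall (i : int) (F : 'I_p -> int) e, zspan HG (Rf w F * Mon q e * uu i).
  move=> i F e; case: (lerP i q%:Z) => hi; first exact: L1.
  rewrite -(@ww_gt m n); [exact: L2 | lia].
have L4 : forall Q v, zspan HG Q -> zspan HG (Q * Xvar v).
  move=> Q v; apply: zspan_mulr => y [[F [e ->]]|[G [P ->]]]; last first.
    rewrite -mulrA; apply: zspanG; right; exists G, (P * Xvar v); reflexivity.
  case: v => k.
    have -> : Xvar (inl k) = uu (k.+1)%:Z by [].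
    exact: L3.
  have -> : Xvar (inr k) = vv k%:Z by [].
  rewrite (@vv_eq m n) mulrBr; apply: zspanB; [exact: L3 | exact: L2].
move=> F P; apply: (G_span HG_G).
apply: (mul_closed (H := zspan HG)).
- exact: zspan0.
- exact: zspanD.
- exact: zspanN.
- exact: L4.
- apply: zspanG; left; exists F, (fun _ => 0%N); rewrite Mon0 mulr1; reflexivity.
Qed.

Lemma claim_all m n k p : (p + k = m.+1)%N -> Claim m n p.
Proof.
elim: k p => [|k IHk] p h.
  rewrite addn0 in h; rewrite h; exact: claim_top.
apply: claim_step; first lia.
apply: IHk; lia.
Qed.

Theorem mainTheorem9 (m n : nat) (P : Pol) :
  exists s : seq (int * (seq int * seq nat)),
    all (fun x => Xplus m n x.2.1 x.2.2) s /\
    in_rel_ideal m n (P - \sum_(x <- s) RIJ m n x.2.1 x.2.2 *~ x.1).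
Proof.
have h := @claim_all m n m.+1 0 (add0n _) (fun _ => 0) P.
rewrite /Rf det_mx00 mul1r in h; exact: h.
Qed.
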